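(* Let $n\ge1$, let $F$ be a permutation of $\mathbb{F}_{2^n}$ with Carlitz rank $m$, and let $c\in\mathbb{F}_{2^n}$ with $c\neq1$. Then ${}_c\Delta_F\le m+2$.
   Context: Every permutation $F$ of $\mathbb{F}_{2^n}$ can be written, for some $m\ge0$ and $a_0,\dots,a_{m+1}\in\mathbb{F}_{2^n}$ with $a_0,a_2,\dots,a_m\neq0$, as $F(x)=(\cdots((a_0x+a_1)^{2^n-2}+a_2)^{2^n-2}\cdots+a_m)^{2^n-2}+a_{m+1}$. The Carlitz rank of $F$ is the least such $m$. For $F:\mathbb{F}_{2^n}\to\mathbb{F}_{2^n}$ and $c\in\mathbb{F}_{2^n}$, ${}_cD_aF(x)=F(x+a)+cF(x)$; ${}_c\Delta_F(a,b)$ is the number of $x\in\mathbb{F}_{2^n}$ with ${}_cD_aF(x)=b$; and ${}_c\Delta_F=\max\{{}_c\Delta_F(a,b): a,b\in\mathbb{F}_{2^n},\ a\neq 0 \text{ if } c=1\}$. *)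

(* Defs.v *)
From mathcomp Require Import all_boot all_order all_algebra all_field.
Set Implicit Arguments. Unset Strict Implicit. Unset Printing Implicit Defensive.
Import GRing.Theory.
Local Open Scope ring_scope.

(* So carlitz_eval n a m x
     = (...((a_0 x + a_1)^(2^n-2) + a_2)^(2^n-2) ... + a_m)^(2^n-2) + a_(m+1). *)
Fixpoint carlitz_eval (F : fieldType) (n : nat) (a : nat -> F) (k : nat) (x : F) : F :=
  match k with
  | 0 => a 0%N * x + a 1%N
  | k'.+1 => (carlitz_eval n a k' x) ^+ (2 ^ n - 2) + a k'.+2
  end.

Definition carlitz_repr (F : fieldType) (n : nat) (P : F -> F) (m : nat) : Prop :=
  exists a : nat -> F,
    a 0%N != 0 /\ (forall i, (2 <= i <= m)%N -> a i != 0) /\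
    forall x, P x = carlitz_eval n a m x.

Definition carlitz_rank_eq (F : fieldType) (n : nat) (P : F -> F) (m : nat) : Prop :=
  carlitz_repr n P m /\ forall m', (m' < m)%N -> ~ carlitz_repr n P m'.

Definition c_Delta (F : finFieldType) (P : F -> F) (c a b : F) : nat :=
  #|[set x : F | P (x + a) + c * P x == b]|.

Definition c_uniformity (F : finFieldType) (P : F -> F) (c : F) : nat :=
  \max_(ab : F * F | (c != 1) || (ab.1 != 0)) c_Delta P c ab.1 ab.2.

(* Main.v *)
Require Import Defs.
From mathcomp Require Import all_boot all_order all_algebra all_field.
From mathcomp Require Import ring zify.
From Stdlib Require Import Lia.
Import GRing.Theory.
Local Open Scope ring_scope.
Set Implicit Arguments. Unset Strict Implicit.

Record mobT (F : Type) := Mob { ma : F; mb : F; mg : F; md : F }.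

Fixpoint mob (F : fieldType) (a : nat -> F) (k : nat) : mobT F :=
  match k with
  | 0 => Mob (a 0%N) (a 1%N) 0 1
  | k'.+1 => let M := mob a k' in
      Mob (mg M + a k'.+2 * ma M) (md M + a k'.+2 * mb M) (ma M) (mb M)
  end.

Lemma mob_det (F : fieldType) (a : nat -> F) k : a 0%N != 0 ->
  ma (mob a k) * md (mob a k) - mb (mob a k) * mg (mob a k) != 0.
Proof.
move=> ha; elim: k => [|k IH] /=.
  by rewrite mulr1 mulr0 subr0.
have -> : (mg (mob a k) + a k.+2 * ma (mob a k)) * mb (mob a k) -
   (md (mob a k) + a k.+2 * mb (mob a k)) * ma (mob a k) =
   - (ma (mob a k) * md (mob a k) - mb (mob a k) * mg (mob a k)) by ring.
by rewrite oppr_eq0.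
Qed.

Lemma mob_ok (F : fieldType) n (a : nat -> F) k x
  (he : forall y : F, y != 0 -> y ^+ (2 ^ n - 2) = y^-1) :
  (forall j, (j < k)%N -> carlitz_eval n a j x != 0) ->
  mg (mob a k) * x + md (mob a k) != 0 /\
  carlitz_eval n a k x = (ma (mob a k) * x + mb (mob a k)) / (mg (mob a k) * x + md (mob a k)).
Proof.
elim: k => [|k IH] H /=.
  by rewrite mul0r add0r oner_neq0 invr1 mulr1.
have [hD hy] := IH (fun j hj => H j (ltnW hj)).
have hyk := H k (ltnSn k).
have hN : ma (mob a k) * x + mb (mob a k) != 0.
  by apply: contraNneq hyk => hN; rewrite hy hN mul0r.
split => //.
rewrite he; last by [].
rewrite hy; field.
by rewrite hN hD.
Qed.

Lemma ceval_inj (F : fieldType) n (a : nat -> F) j : a 0%N != 0 ->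
  (0 : F) ^+ (2 ^ n - 2) = 0 ->
  (forall y : F, y != 0 -> y ^+ (2 ^ n - 2) = y^-1) ->
  injective (carlitz_eval n a j).
Proof.
move=> ha h0 he; elim: j => [|j IH] x y /=.
  by move/addIr/(mulfI ha).
move/addIr => h; apply: IH.
have [u0|u0] := eqVneq (carlitz_eval n a j x) 0;
have [v0|v0] := eqVneq (carlitz_eval n a j y) 0.
- by rewrite u0 v0.
- by move: h; rewrite u0 h0 (he _ v0) => /esym/eqP; rewrite invr_eq0 (negbTE v0).
- by move: h; rewrite v0 h0 (he _ u0) => /eqP; rewrite invr_eq0 (negbTE u0).
- by move: h; rewrite (he _ u0) (he _ v0); apply: invr_inj.
Qed.

Lemma quad_roots (F : finFieldType) (q0 q1 q2 : F) (S : {set F}) :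
  (q1 != 0 \/ exists x, q2 * x ^+ 2 + q1 * x + q0 != 0) ->
  (forall x, x \in S -> q2 * x ^+ 2 + q1 * x + q0 = 0) -> (#|S| <= 2)%N.
Proof.
move=> hnz hS.
pose p := Poly [:: q0; q1; q2].
have hp : forall x, p.[x] = q2 * x ^+ 2 + q1 * x + q0.
  by move=> x; rewrite /p horner_Poly /=; ring.
have pn0 : p != 0.
  case: hnz => [h1|[x hx]].
    by apply: contraNneq h1 => hp0; rewrite -[q1]/([:: q0; q1; q2]`_1) -coef_Poly -/p hp0 coef0.
  by apply: contraNneq hx => hp0; rewrite -hp hp0 horner0.
have := max_poly_roots pn0 (rs := enum S).
rewrite enum_uniq cardE => /(_ _ isT) h.
have : (size (enum S) < 3)%N.
  apply: (leq_trans _ (size_Poly [:: q0; q1; q2])); apply: h.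
  by apply/allP => x; rewrite mem_enum => /hS; rewrite /root hp => ->.
by [].
Qed.

Lemma card_zeros (F : finFieldType) (m : nat) (y : nat -> F -> F) :
  (forall j, injective (y j)) ->
  (#|[set x | has (fun j => y j x == 0%R) (iota 0 m)]| <= m)%N.
Proof.
move=> hinj; elim: m => [|m IH].
  by rewrite (_ : [set x | _] = set0) ?cards0 //; apply/setP => x; rewrite !inE.
rewrite (_ : [set x | _] = [set x | has (fun j => y j x == 0) (iota 0 m)] :|: [set x | y m x == 0]).
  apply: leq_trans (leq_card_setU _ _) _.
  rewrite -addn1 leq_add //.
  apply/card_le1_eqP => u v; rewrite !inE => /eqP hu /eqP hv.
  by apply: (hinj m); rewrite hu hv.
apply/setP => x; rewrite !inE -addn1 iotaD has_cat /= orbF add0n //.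
Qed.

Theorem mainTheorem5 (F : finFieldType) (n : nat) (hn : (1 <= n)%N)
  (hcard : #|F| = (2 ^ n)%N) (P : F -> F) (hperm : bijective P) (m : nat)
  (hrank : carlitz_rank_eq n P m) (c : F) (hc : c != 1) :
  (c_uniformity P c <= m + 2)%N.
Proof.
case: hrank => [[a [ha0 [hai hP]]] _].
have injP := bij_inj hperm.
have ch2 : (2 \in [pchar F])%N by apply: (card_finPcharP hcard).
have hc1 : 1 + c != 0.
  apply: contra hc => /eqP h.
  by rewrite -(oppr_pchar2 ch2 1) -addr_eq0 addrC h.
apply/bigmax_leqP => [[s b]] /= _; rewrite /c_Delta.
set S := [set x | _].
have [c0|c0] := eqVneq c 0.
  apply: leq_trans (_ : 1 <= _)%N; last by rewrite addn2.
  apply/card_le1_eqP => u v; rewrite !inE c0 !mul0r !addr0 => /eqP hu /eqP hv.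
  by apply: (addIr s); apply: injP; rewrite hu hv.
have [s0|s0] := eqVneq s 0.
  apply: leq_trans (_ : 1 <= _)%N; last by rewrite addn2.
  apply/card_le1_eqP => u v; rewrite !inE s0 !addr0 => /eqP hu /eqP hv.
  apply: injP; apply: (mulfI hc1).
  by rewrite !mulrDl !mul1r hu hv.
have hn2 : (2 <= n)%N.
  case: n hn hcard {hai hP} => [|[|n']] //= _ hcard.
  have h2 : c * c = c * 1 by rewrite mulr1 -expr2 -{2}(expf_card c) hcard.
  have h := mulfI c0 h2.
  by move: hc; rewrite h eqxx.
have he2 : (2 <= 2 ^ n - 2)%N.
  have : (2 ^ 2 <= 2 ^ n)%N by rewrite leq_exp2l.
  rewrite (_ : 2 ^ 2 = 4)%N //; lia.
have h0 : (0 : F) ^+ (2 ^ n - 2) = 0 by rewrite expr0n; case: (2 ^ n - 2)%N he2.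
have he : forall y : F, y != 0 -> y ^+ (2 ^ n - 2) = y^-1.
  move=> y y0; apply: (mulIf y0); rewrite mulVf //.
  apply: (mulIf y0); rewrite mul1r -exprSr -exprSr.
  have -> : (2 ^ n - 2).+2 = #|F| by rewrite hcard; lia.
  by rewrite expf_card.
pose y j x := carlitz_eval n a j x.
have yinj : forall j, injective (y j) by move=> j; apply: ceval_inj.
pose O := [set x | has (fun j => y j x == 0) (iota 0 m)].
have cardO : (#|O| <= m)%N by apply: card_zeros.
have notO : forall x, x \notin O -> forall j, (j < m)%N -> y j x != 0.
  move=> x; rewrite inE => /hasPn h j hj; apply: h; rewrite mem_iota; lia.
have pair : forall x, x \in S -> x + s \in S -> False.
  move=> x; rewrite !inE (addrK_pchar2 ch2) => /eqP h1 /eqP h2.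
  have : (1 - c) * (P (x + s) - P x) = 0.
    transitivity ((P (x + s) + c * P x) - (P x + c * P (x + s))); first by ring.
    by rewrite h1 h2 subrr.
  move/eqP; rewrite mulf_eq0 subr_eq0 [1 == c]eq_sym (negbTE hc) /= subr_eq0 => /eqP /injP hxs.
  have hs : s = 0 by apply: (addrI x); rewrite addr0.
  by move: s0; rewrite hs eqxx.
pose Bs := O :|: [set x | x + s \in O].
rewrite -(cardsID Bs S).
have T1 : (#|S :&: Bs| <= m)%N.
  pose g x := if x \in O then x else x + s.
  have ginj : {in S :&: Bs &, injective g}.
    move=> u v /setIP [uS _] /setIP [vS _]; rewrite /g.
    case: ifP => uo; case: ifP => vo.
    - by [].
    - move=> huv; exfalso; apply: (pair v vS); by rewrite -huv.
    - move=> huv; exfalso; apply: (pair u uS); by rewrite huv.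
    - by move/addIr.
  apply: leq_trans cardO.
  rewrite -(card_in_imset ginj).
  apply: subset_leq_card; apply/subsetP => z /imsetP [x hx ->].
  move: hx => /setIP [_] /setUP [xo|]; rewrite /g; first by rewrite xo.
  by rewrite inE => xso; case: ifP.
have T2 : (#|S :\: Bs| <= 2)%N.
  pose al := ma (mob a m); pose be := mb (mob a m);
  pose ga := mg (mob a m); pose de := md (mob a m).
  have hdet : al * de - be * ga != 0 by apply: mob_det.
  pose q2 := al * ga + c * al * ga - b * ga * ga.
  pose q1 := al * de + (al * s + be) * ga + c * (al * (ga * s + de) + be * ga)
             - b * (ga * de + (ga * s + de) * ga).
  pose q0 := (al * s + be) * de + c * be * (ga * s + de) - b * (ga * s + de) * de.
  have hQ : forall x, q2 * x ^+ 2 + q1 * x + q0 =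
     (al * (x + s) + be) * (ga * x + de) + c * (al * x + be) * (ga * (x + s) + de)
     - b * (ga * x + de) * (ga * (x + s) + de).
    by move=> x; rewrite /q2 /q1 /q0; ring.
  apply: (quad_roots (q0 := q0) (q1 := q1) (q2 := q2)).
    have [g0|g0] := eqVneq ga 0.
      left; rewrite /q1 g0.
      have -> : al * de + (al * s + be) * 0 + c * (al * (0 * s + de) + be * 0) -
          b * (0 * de + (0 * s + de) * 0) = al * de * (1 + c) by ring.
      rewrite !mulf_neq0 //.
        by move: hdet; rewrite g0 mulr0 subr0 mulf_eq0 negb_or => /andP [].
      by move: hdet; rewrite g0 mulr0 subr0 mulf_eq0 negb_or => /andP [].
    right; exists (- de / ga); rewrite hQ.
    have -> : (al * (- de / ga + s) + be) * (ga * (- de / ga) + de) +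
       c * (al * (- de / ga) + be) * (ga * (- de / ga + s) + de) -
       b * (ga * (- de / ga) + de) * (ga * (- de / ga + s) + de) =
       - c * (al * de - be * ga) * s.
      by field.
    by rewrite !mulf_neq0 // oppr_eq0.
  move=> x /setDP [hxS hxB].
  have xO : x \notin O by apply: contra hxB => h; apply/setUP; left.
  have xsO : x + s \notin O by apply: contra hxB => h; apply/setUP; right; rewrite inE.
  move: hxS; rewrite inE => /eqP hx.
  have [Dx hyx] := mob_ok he (notO x xO).
  have [Dxs hyxs] := mob_ok he (notO _ xsO).
  rewrite hQ.
  rewrite !hP -/(y m x) -/(y m (x + s)) in hx.
  rewrite /y hyx hyxs in hx.
  rewrite -/al -/be -/ga -/de in hx Dx Dxs.
  have -> : (al * (x + s) + be) * (ga * x + de) + c * (al * x + be) * (ga * (x + s) + de) -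
      b * (ga * x + de) * (ga * (x + s) + de) =
      (ga * x + de) * (ga * (x + s) + de) *
      ((al * (x + s) + be) / (ga * (x + s) + de) + c * ((al * x + be) / (ga * x + de)) - b).
    by field; rewrite Dx Dxs.
  by rewrite hx subrr mulr0.
exact: leq_add T1 T2.
Qed.
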